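(* Let $H=\bigcup_{j=1}^n(c_j,d_j)\subset\mathbb R$ with pairwise disjoint closed intervals $[c_j,d_j]$, let $\mathcal B$ be finite and $m\ge2$. Assume for each $\beta\in\mathcal B$: $b_\beta,\theta_\beta\in C^m(\bar H)$, $b_\beta>0$ on $\bar H$, $\theta_\beta(H)\subset H$; and that there exist $\mu\ge1$ and $\kappa<1$ with $|\theta_\omega(x)-\theta_\omega(y)|\le\kappa|x-y|$ for all $\omega\in\mathcal B_\mu$, $x,y\in\bar H$. Let $M_0=\sup\{|D^2\theta_\beta(x)|:\beta\in\mathcal B,x\in\bar H\}$, $\epsilon_0=1$ and $\epsilon_\nu=\sup\{|\theta_\omega(x)-\theta_\omega(y)|/|x-y|:\omega\in\mathcal B_\nu,\ x,y\in H,\ x\ne y\}$ for $\nu\ge1$. Then for every $k\ge1$, every $\omega\in\mathcal B_k$ and every $x\in\bar H$, $$|D^2\theta_\omega(x)|\le M_0\sum_{j=0}^{k-1}\epsilon_j^2\,\epsilon_{k-j-1}.$$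
   Context: $D=d/dx$. $\mathcal B_\nu=\{(j_1,\ldots,j_\nu):j_k\in\mathcal B\}$ and $\theta_{(j_1,\ldots,j_\nu)}=\theta_{j_\nu}\circ\cdots\circ\theta_{j_1}$. $C^m(\bar H)$ denotes real $C^m$ functions on $H$ whose derivatives of order $\le m$ extend continuously to $\bar H$. *)

(* Defs.v *)
From Stdlib Require Import Reals Lra List.
From Coquelicot Require Import Coquelicot.
Open Scope R_scope.

Definition Hset (c d : nat -> R) (n : nat) (x : R) : Prop :=
  exists j, (j < n)%nat /\ c j < x < d j.

Definition closure_of (A : R -> Prop) (x : R) : Prop :=
  forall eps : R, 0 < eps -> exists y, A y /\ Rabs (x - y) < eps.

(* [ext_at A g x l]: g(y) -> l as y -> x within A (the value at x of the
   continuous extension of g|_A to the closure of A). *)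
Definition ext_at (A : R -> Prop) (g : R -> R) (x l : R) : Prop :=
  filterlim g (within A (locally x)) (locally l).

(* f in C^m(closure H): all derivatives of order <= m exist on the open set H
   and extend continuously to the closure of H. *)
Definition Cm_bar (A : R -> Prop) (m : nat) (f : R -> R) : Prop :=
  forall k, (k <= m)%nat ->
    (forall x, A x -> ex_derive_n f k x) /\
    (forall x, closure_of A x -> exists l, ext_at A (Derive_n f k) x l).

(* theta_(j1,...,jv) = theta_jv o ... o theta_j1 *)
Fixpoint theta_w {B : Type} (theta : B -> R -> R) (w : list B) : R -> R :=
  match w with
  | nil => fun x => x
  | j :: w' => fun x => theta_w theta w' (theta j x)
  end.

Definition M0 {B : Type} (A : R -> Prop) (theta : B -> R -> R) : R :=
  real (Lub_Rbar (fun r => exists (beta : B) x l,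
          closure_of A x /\ ext_at A (Derive_n (theta beta) 2) x l /\ r = Rabs l)).

Definition eps_nu {B : Type} (A : R -> Prop) (theta : B -> R -> R) (nu : nat) : R :=
  match nu with
  | O => 1
  | S _ => real (Lub_Rbar (fun r => exists (w : list B) x y,
          length w = nu /\ A x /\ A y /\ x <> y /\
          r = Rabs (theta_w theta w x - theta_w theta w y) / Rabs (x - y)))
  end.

(* Main.v *)
Require Import Defs.
From Stdlib Require Import Reals List.
From Coquelicot Require Import Coquelicot.
From Stdlib Require Import Lra Classical ClassicalEpsilon Lia.
Open Scope R_scope.

Lemma ext_near A g x l (H : ext_at A g x l) (eps : R) : 0 < eps ->
  exists del, 0 < del /\ forall y, Rabs (y - x) < del -> A y -> Rabs (g y - l) < eps.
Proof.
  intros He. unfold ext_at in H. rewrite filterlim_locally in H.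
  specialize (H (mkposreal eps He)). unfold within in H.
  destruct H as [[del Hd] Hdel]. exists del; split; [exact Hd|].
  intros y Hy Ay. specialize (Hdel y Hy Ay).
  exact Hdel.
Qed.

Lemma ext_val A g x l : A x -> ext_at A g x l -> g x = l.
Proof.
  intros Ax H. destruct (Req_dec (g x) l) as [e|ne]; [exact e|].
  assert (Hp : 0 < Rabs (g x - l)) by (apply Rabs_pos_lt; lra).
  destruct (ext_near A g x l H _ Hp) as [del [Hd Hdel]].
  specialize (Hdel x). rewrite Rminus_diag, Rabs_R0 in Hdel. specialize (Hdel Hd Ax). lra.
Qed.

Lemma ext_le A g x l K : (forall y, A y -> Rabs (g y) <= K) -> closure_of A x ->
  ext_at A g x l -> Rabs l <= K.
Proof.
  intros HK Hc H. destruct (Rle_dec (Rabs l) K) as [h|h]; [exact h|].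
  assert (Hp : 0 < Rabs l - K) by lra.
  destruct (ext_near A g x l H _ Hp) as [del [Hd Hdel]].
  destruct (Hc del Hd) as [y [Ay Hy]].
  rewrite Rabs_minus_sym in Hy. specialize (Hdel y Hy Ay). specialize (HK y Ay).
  pose proof (Rabs_triang_inv l (g y)). rewrite Rabs_minus_sym in Hdel. lra.
Qed.

Lemma lub_elem (S : R -> Prop) r : (exists K, forall s, S s -> s <= K) -> S r ->
  r <= real (Lub_Rbar S).
Proof.
  intros [K HK] Sr. destruct (Lub_Rbar_correct S) as [Hub Hlub].
  assert (h1 := Hub r Sr).
  assert (h2 : Rbar_le (Lub_Rbar S) K) by (apply Hlub; intros s Ss; apply HK; exact Ss).
  destruct (Lub_Rbar S); simpl in *; try contradiction; lra.
Qed.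

Lemma bounded_on A g R0 : (forall x, A x -> -R0 <= x <= R0) ->
  (forall x, closure_of A x -> exists l, ext_at A g x l) ->
  exists M, forall y, A y -> Rabs (g y) <= M.
Proof.
  intros HA Hext. apply NNPP; intros Hno.
  assert (Hn : forall n : nat, exists y, A y /\ INR n < Rabs (g y)).
  { intros n. apply NNPP; intros Hc. apply Hno. exists (INR n). intros y Ay.
    apply Rnot_lt_le. intros Hl. apply Hc. exists y; auto. }
  pose (u := fun n => proj1_sig (constructive_indefinite_description _ (Hn n))).
  assert (Hu : forall n, A (u n) /\ INR n < Rabs (g (u n))).
  { intros n. unfold u. destruct (constructive_indefinite_description _ (Hn n)); simpl; auto. }
  destruct (Bolzano_Weierstrass u (fun c => -R0 <= c <= R0) (compact_P3 _ _)) as [l Hl].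
  { intros n. apply HA. apply Hu. }
  assert (Hcl : closure_of A l).
  { intros eps He. destruct (Hl (disc l (mkposreal eps He)) 0%nat) as [p [_ Hp]].
    - exists (mkposreal eps He). intros z Hz; exact Hz.
    - exists (u p). split; [apply Hu|]. unfold disc in Hp; simpl in Hp.
      rewrite Rabs_minus_sym; exact Hp. }
  destruct (Hext l Hcl) as [l' Hl'].
  destruct (ext_near A g l l' Hl' 1 Rlt_0_1) as [del [Hd Hdel]].
  destruct (INR_unbounded (Rabs l' + 1)) as [N HN].
  destruct (Hl (disc l (mkposreal del Hd)) N) as [p [Hp1 Hp2]].
  { exists (mkposreal del Hd). intros z Hz; exact Hz. }
  unfold disc in Hp2; simpl in Hp2.
  specialize (Hdel (u p) Hp2 (proj1 (Hu p))).
  pose proof (proj2 (Hu p)). pose proof (le_INR _ _ Hp1).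
  pose proof (Rabs_triang_inv (g (u p)) l'). lra.
Qed.

Lemma my_list_max {B : Type} (L : list B) (P : B -> R -> Prop) :
  (forall b M M', M <= M' -> P b M -> P b M') -> (forall b, exists M, P b M) ->
  exists M, forall b, In b L -> P b M.
Proof.
  intros Hmono Hex. induction L as [|a L IH].
  - exists 0. intros b [].
  - destruct IH as [M1 H1]. destruct (Hex a) as [M2 H2].
    exists (Rmax M1 M2). intros b [<-|Hb].
    + apply (Hmono _ M2); [apply Rmax_r|exact H2].
    + apply (Hmono _ M1); [apply Rmax_l|apply H1; exact Hb].
Qed.

Lemma fin_min (N : nat) (Q : nat -> R -> Prop) :
  (forall k del del', 0 < del' <= del -> Q k del -> Q k del') ->
  (forall k, (k < N)%nat -> exists del, 0 < del /\ Q k del) ->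
  exists del, 0 < del /\ forall k, (k < N)%nat -> Q k del.
Proof.
  intros Hmono. induction N as [|N IH]; intros Hex.
  - exists 1. split; [lra|]. intros k Hk; inversion Hk.
  - destruct IH as [d1 [Hd1 H1]]. { intros k Hk. apply Hex. auto. }
    destruct (Hex N (Nat.lt_succ_diag_r N)) as [d2 [Hd2 H2]].
    exists (Rmin d1 d2). split; [apply Rmin_glb_lt; auto|].
    intros k Hk. destruct (Nat.eq_dec k N) as [->|ne].
    + apply (Hmono _ d2); [split; [apply Rmin_glb_lt; auto|apply Rmin_r]|exact H2].
    + apply (Hmono _ d1); [split; [apply Rmin_glb_lt; auto|apply Rmin_l]|].
      apply H1. lia.
Qed.

Lemma H_open c d n x : Hset c d n x ->
  exists del, 0 < del /\ forall y, Rabs (y - x) < del -> Hset c d n y.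
Proof.
  intros [j [Hj [H1 H2]]]. exists (Rmin (x - c j) (d j - x)).
  split; [apply Rmin_glb_lt; lra|].
  intros y Hy. exists j. split; [exact Hj|].
  pose proof (Rmin_l (x - c j) (d j - x)). pose proof (Rmin_r (x - c j) (d j - x)).
  apply Rabs_def2 in Hy. lra.
Qed.

Lemma H_locally c d n x : Hset c d n x -> locally x (Hset c d n).
Proof.
  intros Hx. destruct (H_open c d n x Hx) as [del [Hd Hdel]].
  exists (mkposreal del Hd). intros y Hy. apply Hdel. exact Hy.
Qed.

Fixpoint sumabs (c d : nat -> R) (n : nat) : R :=
  match n with O => 0 | S n => sumabs c d n + (Rabs (c n) + Rabs (d n)) end.

Lemma sumabs_ge c d n j : (j < n)%nat -> Rabs (c j) + Rabs (d j) <= sumabs c d n.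
Proof.
  induction n as [|n IH]; intros Hj; [lia|].
  simpl. assert (0 <= sumabs c d n).
  { clear. induction n; simpl; [lra|]. pose proof (Rabs_pos (c n)); pose proof (Rabs_pos (d n)); lra. }
  destruct (Nat.eq_dec j n) as [->|ne]; [lra|].
  pose proof (Rabs_pos (c n)); pose proof (Rabs_pos (d n)).
  assert (h : (j < n)%nat) by lia. specialize (IH h). lra.
Qed.

Lemma H_bound c d n : exists R0, forall x, Hset c d n x -> -R0 <= x <= R0.
Proof.
  exists (sumabs c d n). intros x [j [Hj [H1 H2]]].
  pose proof (sumabs_ge c d n j Hj).
  pose proof (Rle_abs (c j)); pose proof (Rle_abs (- c j)); pose proof (Rle_abs (d j));
  pose proof (Rle_abs (- d j)). rewrite Rabs_Ropp in *. lra.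
Qed.

Lemma pair_gap (ci di cj dj : R) :
  (forall x, ~ ((ci <= x <= di) /\ (cj <= x <= dj))) ->
  exists del, 0 < del /\ forall x y, ci < x < di -> cj < y < dj -> del <= Rabs (x - y).
Proof.
  intros Hd. destruct (Rlt_dec di cj) as [h1|h1].
  - exists (cj - di). split; [lra|]. intros x y Hx Hy.
    rewrite Rabs_minus_sym, Rabs_right; lra.
  - destruct (Rlt_dec dj ci) as [h2|h2].
    + exists (ci - dj). split; [lra|]. intros x y Hx Hy. rewrite Rabs_right; lra.
    + exists 1. split; [lra|]. intros x y Hx Hy. exfalso.
      apply (Hd (Rmax ci cj)).
      pose proof (Rmax_l ci cj); pose proof (Rmax_r ci cj).
      destruct (Rmax_Rle ci cj (Rmax ci cj)) as [_ _].
      unfold Rmax in *. destruct (Rle_dec ci cj); lra.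
Qed.

Lemma H_gap c d n
  (Hdisj : forall i j, (i < n)%nat -> (j < n)%nat -> i <> j ->
             forall x, ~ ((c i <= x <= d i) /\ (c j <= x <= d j))) :
  exists del, 0 < del /\ forall x y, Hset c d n x -> Hset c d n y -> Rabs (x - y) < del ->
    exists j, (j < n)%nat /\ c j < x < d j /\ c j < y < d j.
Proof.
  destruct (fin_min n (fun i del => forall j, (j < n)%nat -> i <> j ->
     forall x y, c i < x < d i -> c j < y < d j -> del <= Rabs (x - y))) as [del [Hd Hdel]].
  - intros k a b Hab Hq j Hj ne x y Hx Hy. specialize (Hq j Hj ne x y Hx Hy). lra.
  - intros i Hi.
    destruct (fin_min n (fun j del => i <> j ->
     forall x y, c i < x < d i -> c j < y < d j -> del <= Rabs (x - y))) as [del [Hd Hdel]].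
    + intros k a b Hab Hq ne x y Hx Hy. specialize (Hq ne x y Hx Hy). lra.
    + intros j Hj. destruct (Nat.eq_dec i j) as [e|ne].
      * exists 1. split; [lra|]. intros ne; contradiction.
      * destruct (pair_gap (c i) (d i) (c j) (d j) (Hdisj i j Hi Hj ne)) as [del [Hd' Hdel]].
        exists del. split; [exact Hd'|]. intros _; exact Hdel.
    + exists del. split; [exact Hd|]. intros j Hj ne. apply (Hdel j Hj ne).
  - exists del. split; [exact Hd|]. intros x y [i [Hi Hx]] [j [Hj Hy]] Hxy.
    destruct (Nat.eq_dec i j) as [<-|ne].
    + exists i. auto.
    + specialize (Hdel i Hi j Hj ne x y Hx Hy). lra.
Qed.

Lemma theta_w_app {B} (theta : B -> R -> R) u v x :
  theta_w theta (u ++ v) x = theta_w theta v (theta_w theta u x).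
Proof. revert x; induction u as [|a u IH]; intros x; simpl; auto. Qed.

Lemma w_maps {B} (A : R -> Prop) (theta : B -> R -> R)
  (Hmaps : forall b x, A x -> A (theta b x)) w x : A x -> A (theta_w theta w x).
Proof. revert x; induction w as [|a w IH]; intros x Hx; simpl; auto. Qed.

Section W.
End W.

Lemma w_D1 {B} (A : R -> Prop) (theta : B -> R -> R)
  (Hmaps : forall b x, A x -> A (theta b x))
  (T1 : forall b x, A x -> ex_derive (theta b) x) w :
  forall x, A x -> ex_derive (theta_w theta w) x.
Proof.
  induction w as [|a w IH]; intros x Hx; simpl.
  - apply ex_derive_id.
  - apply (ex_derive_comp (theta_w theta w) (theta a)); auto.
Qed.

Lemma w_Dform {B} (A : R -> Prop) (theta : B -> R -> R)
  (Hmaps : forall b x, A x -> A (theta b x))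
  (T1 : forall b x, A x -> ex_derive (theta b) x) a w x : A x ->
  Derive (theta_w theta (a :: w)) x = Derive (theta a) x * Derive (theta_w theta w) (theta a x).
Proof.
  intros Hx. simpl. apply Derive_comp; [apply (w_D1 A); auto|auto].
Qed.

Lemma w_D2 {B} (A : R -> Prop) (theta : B -> R -> R)
  (HAloc : forall x, A x -> locally x A)
  (Hmaps : forall b x, A x -> A (theta b x))
  (T1 : forall b x, A x -> ex_derive (theta b) x)
  (T2 : forall b x, A x -> ex_derive (Derive (theta b)) x) w :
  forall x, A x -> ex_derive (Derive (theta_w theta w)) x.
Proof.
  induction w as [|a w IH]; intros x Hx.
  - apply (ex_derive_ext (fun _ => 1)). { intros t. simpl. rewrite Derive_id. reflexivity. }
    apply ex_derive_const.
  - apply (ex_derive_ext_loc (fun t => Derive (theta a) t * Derive (theta_w theta w) (theta a t))).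
    + apply (filter_imp A); [|apply HAloc; auto]. intros t Ht.
      symmetry. apply (w_Dform A); auto.
    + apply ex_derive_mult; [auto|].
      apply (ex_derive_comp (Derive (theta_w theta w)) (theta a)); auto.
Qed.

Lemma w_D2form {B} (A : R -> Prop) (theta : B -> R -> R)
  (HAloc : forall x, A x -> locally x A)
  (Hmaps : forall b x, A x -> A (theta b x))
  (T1 : forall b x, A x -> ex_derive (theta b) x)
  (T2 : forall b x, A x -> ex_derive (Derive (theta b)) x) a w x : A x ->
  Derive (Derive (theta_w theta (a :: w))) x =
   Derive (Derive (theta a)) x * Derive (theta_w theta w) (theta a x) +
   Derive (theta a) x * (Derive (theta a) x * Derive (Derive (theta_w theta w)) (theta a x)).
Proof.
  intros Hx.
  rewrite (Derive_ext_loc _ (fun t => Derive (theta a) t * Derive (theta_w theta w) (theta a t))).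
  - rewrite Derive_mult; auto.
    + rewrite (Derive_comp (Derive (theta_w theta w)) (theta a)); auto.
      apply (w_D2 A); auto.
    + apply (ex_derive_comp (Derive (theta_w theta w)) (theta a)); auto.
      apply (w_D2 A); auto.
  - apply (filter_imp A); [|apply HAloc; auto]. intros t Ht. apply (w_Dform A); auto.
Qed.

Fixpoint sumk (f : nat -> R) (k : nat) : R :=
  match k with O => 0 | S k => sumk f k + f k end.

Lemma sumk_shift f k : sumk f (S k) = f 0%nat + sumk (fun j => f (S j)) k.
Proof. induction k as [|k IH]; simpl in *; [lra|]. rewrite IH. lra. Qed.

Lemma sumk_ext f g k : (forall j, (j < k)%nat -> f j = g j) -> sumk f k = sumk g k.
Proof. induction k as [|k IH]; intros H; simpl; auto. rewrite IH by auto. rewrite H by lia. auto. Qed.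

Lemma sum_f_sumk f n : sum_f_R0 f n = sumk f (S n).
Proof. induction n as [|n IH]; simpl in *; [lra|]. rewrite IH. simpl. lra. Qed.

Lemma Derive_app1 {B} (A : R -> Prop) (theta : B -> R -> R)
  (Hmaps : forall b x, A x -> A (theta b x))
  (T1 : forall b x, A x -> ex_derive (theta b) x) u a x : A x ->
  Derive (theta_w theta (u ++ a :: nil)) x =
  Derive (theta_w theta u) x * Derive (theta a) (theta_w theta u x).
Proof.
  intros Hx. rewrite (Derive_ext _ (fun t => theta a (theta_w theta u t))).
  - apply Derive_comp; [apply T1; apply (w_maps A); auto|apply (w_D1 A); auto].
  - intros t. rewrite theta_w_app. reflexivity.
Qed.

Lemma key_ineq t g1 a g2 s M E1 E2 :
  Rabs t <= M -> Rabs g1 <= E1 -> Rabs s <= E2 ->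
  Rabs (t * g1 + a * (a * g2)) * s ^ 2 <= M * (E2 ^ 2 * E1) + Rabs g2 * (s * a) ^ 2.
Proof.
  intros h1 h2 h3.
  pose proof (Rabs_pos t); pose proof (Rabs_pos g1); pose proof (Rabs_pos s); pose proof (Rabs_pos g2).
  assert (e1 : s ^ 2 = Rabs s ^ 2) by (rewrite pow2_abs; reflexivity).
  assert (e2 : (s * a) ^ 2 = s ^ 2 * (Rabs a) ^ 2).
  { rewrite pow2_abs. ring. }
  assert (h4 : Rabs (t * g1 + a * (a * g2)) <= Rabs t * Rabs g1 + Rabs a ^ 2 * Rabs g2).
  { eapply Rle_trans; [apply Rabs_triang|]. rewrite !Rabs_mult. simpl. lra. }
  assert (0 <= s ^ 2) by apply pow2_ge_0.
  assert (h5 : Rabs t * Rabs g1 * Rabs s ^ 2 <= M * (E2 ^ 2 * E1)).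
  { assert (Rabs s ^ 2 <= E2 ^ 2) by (apply pow_incr; lra).
    assert (Rabs t * Rabs g1 <= M * E1) by (apply Rmult_le_compat; lra).
    assert (0 <= Rabs s ^ 2) by apply pow2_ge_0.
    replace (M * (E2 ^ 2 * E1)) with ((M * E1) * E2 ^ 2) by ring.
    apply Rmult_le_compat; try lra. apply Rmult_le_pos; lra. }
  rewrite e2. rewrite e1 in *.
  apply Rle_trans with ((Rabs t * Rabs g1 + Rabs a ^ 2 * Rabs g2) * Rabs s ^ 2).
  - apply Rmult_le_compat_r; auto.
  - nra.
Qed.

Lemma main_ind {B} (A : R -> Prop) (theta : B -> R -> R)
  (HAloc : forall x, A x -> locally x A)
  (Hmaps : forall b x, A x -> A (theta b x))
  (T1 : forall b x, A x -> ex_derive (theta b) x)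
  (T2 : forall b x, A x -> ex_derive (Derive (theta b)) x)
  (e : nat -> R) (M : R)
  (E1 : forall v x, A x -> Rabs (Derive (theta_w theta v) x) <= e (length v))
  (E2 : forall b y, A y -> Rabs (Derive (Derive (theta b)) y) <= M) w :
  forall u x, A x ->
  Rabs (Derive (Derive (theta_w theta w)) (theta_w theta u x)) * (Derive (theta_w theta u) x) ^ 2
  <= M * sumk (fun j => e (length u + j)%nat ^ 2 * e (length w - 1 - j)%nat) (length w).
Proof.
  induction w as [|a w IH]; intros u x Hx.
  - simpl. rewrite (Derive_ext (Derive (fun x => x)) (fun _ => 1)).
    + rewrite Derive_const, Rabs_R0. lra.
    + intros t; apply Derive_id.
  - set (y := theta_w theta u x).
    assert (Hy : A y) by (apply (w_maps A); auto).
    rewrite (w_D2form A) by auto.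
    specialize (IH (u ++ a :: nil) x Hx).
    rewrite (Derive_app1 A) in IH by auto. rewrite theta_w_app in IH. fold y in IH. change (theta_w theta (a :: nil) y) with (theta a y) in IH.
    eapply Rle_trans.
    { apply (key_ineq _ _ _ _ _ M (e (length w)) (e (length u))).
      - apply E2; auto.
      - apply (E1 w). apply Hmaps; auto.
      - apply E1; auto. }
    eapply Rle_trans; [apply Rplus_le_compat_l; exact IH|].
    change (length (a :: w)) with (S (length w)). rewrite sumk_shift.
    rewrite (sumk_ext (fun j => e (length (u ++ a :: nil) + j)%nat ^ 2 * e (length w - 1 - j)%nat)
       (fun j => e (length u + S j)%nat ^ 2 * e (S (length w) - 1 - S j)%nat)).
    + replace (length u + 0)%nat with (length u) by lia.
      replace (S (length w) - 1 - 0)%nat with (length w) by lia. lra.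
    + intros j Hj. rewrite length_app. change (length (a :: nil)) with 1%nat.
      replace (length u + 1 + j)%nat with (length u + S j)%nat by lia.
      replace (length w - 1 - j)%nat with (length w - S j)%nat by lia.
      replace (S (length w) - 1 - S j)%nat with (length w - S j)%nat by lia. reflexivity.
Qed.

Lemma deriv_le_quot (A : R -> Prop) F E x
  (HAo : forall x, A x -> exists del, 0 < del /\ forall y, Rabs (y - x) < del -> A y) :
  (forall x y, A x -> A y -> x <> y -> Rabs (F x - F y) / Rabs (x - y) <= E) ->
  A x -> ex_derive F x -> Rabs (Derive F x) <= E.
Proof.
  intros HQ Hx Hd. set (D := Derive F x).
  assert (HD : derivable_pt_lim F x D) by (apply is_derive_Reals; apply Derive_correct; auto).
  destruct (Rle_dec (Rabs D) E) as [h|h]; [exact h|]. exfalso.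
  assert (Hp : 0 < Rabs D - E) by lra.
  destruct (HD _ Hp) as [del Hdel].
  destruct (HAo x Hx) as [d2 [Hd2 Hd2']].
  set (h0 := Rmin del d2 / 2).
  assert (Hm : 0 < Rmin del d2) by (apply Rmin_glb_lt; [apply cond_pos|auto]).
  assert (Hh0 : 0 < h0) by (unfold h0; lra).
  assert (Hh1 : Rabs h0 < del) by (rewrite Rabs_right by lra; pose proof (Rmin_l del d2); unfold h0; lra).
  assert (Hh2 : A (x + h0)) by (apply Hd2'; replace (x + h0 - x) with h0 by ring;
     rewrite Rabs_right by lra; pose proof (Rmin_r del d2); unfold h0; lra).
  specialize (Hdel h0 ltac:(lra) Hh1).
  specialize (HQ (x + h0) x Hh2 Hx ltac:(lra)).
  replace (x + h0 - x) with h0 in HQ by ring.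
  rewrite <- Rabs_div in HQ by lra.
  pose proof (Rabs_triang_inv ((F (x + h0) - F x) / h0) D).
  rewrite Rabs_minus_sym in Hdel. pose proof (Rabs_triang_inv D ((F (x + h0) - F x) / h0)). lra.
Qed.

Lemma w_Dbound {B} (A : R -> Prop) (theta : B -> R -> R)
  (Hmaps : forall b x, A x -> A (theta b x))
  (T1 : forall b x, A x -> ex_derive (theta b) x) L
  (HL : forall b x, A x -> Rabs (Derive (theta b) x) <= L) (HL0 : 0 <= L) w :
  forall x, A x -> Rabs (Derive (theta_w theta w) x) <= L ^ length w.
Proof.
  induction w as [|a w IH]; intros x Hx.
  - simpl. rewrite Derive_id, Rabs_R1. lra.
  - rewrite (w_Dform A) by auto. rewrite Rabs_mult. simpl length. simpl pow.
    apply Rmult_le_compat; try apply Rabs_pos; auto.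
Qed.

Lemma quot_bound {B} (A : R -> Prop) (theta : B -> R -> R)
  (HAo : forall x, A x -> exists del, 0 < del /\ forall y, Rabs (y - x) < del -> A y)
  (Hmaps : forall b x, A x -> A (theta b x))
  (T1 : forall b x, A x -> ex_derive (theta b) x) L
  (HL : forall b x, A x -> Rabs (Derive (theta b) x) <= L) (HL0 : 0 <= L) R0
  (HR : forall x, A x -> -R0 <= x <= R0) del (Hdel : 0 < del)
  (Hgap : forall x y, A x -> A y -> Rabs (x - y) < del ->
      forall z, Rmin x y <= z <= Rmax x y -> A z) nu :
  exists K, forall w x y, length w = nu -> A x -> A y -> x <> y ->
    Rabs (theta_w theta w x - theta_w theta w y) / Rabs (x - y) <= K.
Proof.
  exists (Rmax (2 * R0 / del) (L ^ nu)). intros w x y Hw Hx Hy Hxy.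
  assert (Hp : 0 < Rabs (x - y)) by (apply Rabs_pos_lt; lra).
  apply Rle_trans with (Rabs (theta_w theta w x - theta_w theta w y) / Rabs (x - y)); [lra|].
  unfold Rdiv. apply Rmult_le_reg_r with (Rabs (x - y)); [exact Hp|].
  rewrite Rmult_assoc, Rinv_l, Rmult_1_r by lra.
  destruct (Rlt_dec (Rabs (x - y)) del) as [hl|hl].
  - set (F := theta_w theta w).
    destruct (MVT_gen F x y (Derive F)) as [z [Hz Heq]].
    + intros z Hz. apply Derive_correct. apply (w_D1 A); auto. apply (Hgap x y); auto; lra.
    + intros z Hz. apply continuity_pt_filterlim. apply (ex_derive_continuous (V:=R_NormedModule)).
      apply (w_D1 A); auto. apply (Hgap x y); auto.
    + assert (HzA : A z) by (apply (Hgap x y); auto).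
      pose proof (w_Dbound A theta Hmaps T1 L HL HL0 w z HzA) as Hb. rewrite Hw in Hb.
      rewrite <- Ropp_minus_distr, Rabs_Ropp. fold F. rewrite Heq, Rabs_mult.
      rewrite (Rabs_minus_sym y x).
      apply Rmult_le_compat_r; [apply Rabs_pos|]. eapply Rle_trans; [exact Hb|apply Rmax_r].
  - pose proof (HR x Hx). pose proof (HR y Hy).
    pose proof (HR _ (w_maps A theta Hmaps w x Hx)). pose proof (HR _ (w_maps A theta Hmaps w y Hy)).
    assert (h1 : Rabs (theta_w theta w x - theta_w theta w y) <= 2 * R0).
    { eapply Rle_trans; [apply Rabs_triang|]. rewrite Rabs_Ropp.
      assert (Rabs (theta_w theta w x) <= R0) by (apply Rabs_le; lra).
      assert (Rabs (theta_w theta w y) <= R0) by (apply Rabs_le; lra). lra. }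
    assert (h2 : 2 * R0 <= 2 * R0 / del * Rabs (x - y)).
    { assert (0 <= R0) by lra.
      apply Rle_trans with (2 * R0 / del * del).
      - right. field. lra.
      - apply Rmult_le_compat_l; [apply Rdiv_le_0_compat; lra|lra]. }
    eapply Rle_trans; [exact h1|]. eapply Rle_trans; [exact h2|].
    apply Rmult_le_compat_r; [lra|apply Rmax_l].
Qed.

Theorem lemma6p2
  (n : nat) (c d : nat -> R)
  (Hdisj : forall i j, (i < n)%nat -> (j < n)%nat -> i <> j ->
             forall x, ~ ((c i <= x <= d i) /\ (c j <= x <= d j)))
  (B : Type) (enumB : list B) (HBfin : forall beta : B, In beta enumB)
  (m : nat) (Hm : (2 <= m)%nat)
  (b theta : B -> R -> R)
  (Hb : forall beta, Cm_bar (Hset c d n) m (b beta))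
  (Hbpos : forall beta x l, closure_of (Hset c d n) x ->
             ext_at (Hset c d n) (b beta) x l -> 0 < l)
  (Htheta : forall beta, Cm_bar (Hset c d n) m (theta beta))
  (Hmaps : forall beta x, Hset c d n x -> Hset c d n (theta beta x))
  (mu : nat) (kappa : R) (Hmu : (1 <= mu)%nat) (Hkappa : kappa < 1)
  (Hcontr : forall w : list B, length w = mu ->
     forall x y l1 l2, closure_of (Hset c d n) x -> closure_of (Hset c d n) y ->
       ext_at (Hset c d n) (theta_w theta w) x l1 ->
       ext_at (Hset c d n) (theta_w theta w) y l2 ->
       Rabs (l1 - l2) <= kappa * Rabs (x - y)) :
  forall (k : nat) (w : list B), (1 <= k)%nat -> length w = k ->
  forall x l, closure_of (Hset c d n) x ->
    ext_at (Hset c d n) (Derive_n (theta_w theta w) 2) x l ->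
    Rabs l <= M0 (Hset c d n) theta *
      sum_f_R0 (fun j => (eps_nu (Hset c d n) theta j) ^ 2 *
                         eps_nu (Hset c d n) theta (k - j - 1)) (k - 1).
Proof.
  intros k w Hk Hw x l Hcl Hext.
  set (A := Hset c d n) in *.
  assert (HAo : forall x, A x -> exists del, 0 < del /\ forall y, Rabs (y - x) < del -> A y)
    by (intros; apply H_open; auto).
  assert (HAloc : forall x, A x -> locally x A) by (intros; apply H_locally; auto).
  assert (T1 : forall b x, A x -> ex_derive (theta b) x).
  { intros bb y Hy. exact (proj1 (Htheta bb 1%nat ltac:(lia)) y Hy). }
  assert (T2 : forall b x, A x -> ex_derive (Derive (theta b)) x).
  { intros bb y Hy. exact (proj1 (Htheta bb 2%nat ltac:(lia)) y Hy). }
  destruct (H_bound c d n) as [R0 HR].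
  destruct (H_gap c d n Hdisj) as [del [Hdel Hgap0]].
  assert (Hgap : forall x y, A x -> A y -> Rabs (x - y) < del ->
      forall z, Rmin x y <= z <= Rmax x y -> A z).
  { intros x1 y1 Hx1 Hy1 Hxy z Hz. destruct (Hgap0 x1 y1 Hx1 Hy1 Hxy) as [j [Hj [h1 h2]]].
    exists j. split; [exact Hj|]. unfold Rmin, Rmax in Hz.
    destruct (Rle_dec x1 y1); lra. }
  destruct (@my_list_max B enumB (fun bb M => forall y, A y -> Rabs (Derive (theta bb) y) <= M))
    as [L0 HL0].
  { intros bb M M' h H y Hy. specialize (H y Hy). lra. }
  { intros bb. apply (bounded_on A _ R0 HR).
    intros y Hy. exact (proj2 (Htheta bb 1%nat ltac:(lia)) y Hy). }
  set (L := Rmax 0 L0).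
  assert (HL : forall bb y, A y -> Rabs (Derive (theta bb) y) <= L).
  { intros bb y Hy. eapply Rle_trans; [apply (HL0 bb (HBfin bb) y Hy)|apply Rmax_r]. }
  assert (HLp : 0 <= L) by apply Rmax_l.
  assert (E1 : forall v y, A y -> Rabs (Derive (theta_w theta v) y) <= eps_nu A theta (length v)).
  { intros v y Hy. destruct v as [|a v'].
    - simpl. rewrite Derive_id, Rabs_R1. lra.
    - apply (deriv_le_quot A); auto; [|apply (w_D1 A); auto].
      intros x1 y1 Hx1 Hy1 ne. unfold eps_nu. cbn [length].
      apply lub_elem.
      + destruct (quot_bound A theta HAo Hmaps T1 L HL HLp R0 HR del Hdel Hgap (S (length v')))
          as [K HK].
        exists K. intros s [w1 [x2 [y2 [h1 [h2 [h3 [h4 ->]]]]]]]. apply HK; auto.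
      + exists (a :: v'), x1, y1. repeat split; auto. }
  destruct (@my_list_max B enumB (fun bb M => forall y, A y -> Rabs (Derive_n (theta bb) 2 y) <= M))
    as [M1 HM1].
  { intros bb M M' h H y Hy. specialize (H y Hy). lra. }
  { intros bb. apply (bounded_on A _ R0 HR).
    intros y Hy. exact (proj2 (Htheta bb 2%nat ltac:(lia)) y Hy). }
  assert (E2 : forall bb y, A y -> Rabs (Derive (Derive (theta bb)) y) <= M0 A theta).
  { intros bb y Hy. unfold M0. apply lub_elem.
    - exists M1. intros s [b1 [x1 [l1 [h1 [h2 ->]]]]].
      apply (ext_le A (Derive_n (theta b1) 2) x1 l1 M1); [|exact h1|exact h2].
      intros z Hz. apply (HM1 b1 (HBfin b1) z Hz).
    - assert (Hyc : closure_of A y) by (intros e He; exists y; split; auto; rewrite Rminus_diag, Rabs_R0; auto).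
      destruct (proj2 (Htheta bb 2%nat ltac:(lia)) y Hyc) as [l1 Hl1].
      exists bb, y, l1. repeat split; auto.
      rewrite <- (ext_val A _ y l1 Hy Hl1). reflexivity. }
  pose proof (main_ind A theta HAloc Hmaps T1 T2 (eps_nu A theta) (M0 A theta) E1 E2 w nil) as Hmain.
  apply (ext_le A (Derive_n (theta_w theta w) 2) x); auto.
  intros y Hy. specialize (Hmain y Hy). simpl in Hmain.
  rewrite Derive_id in Hmain.
  replace (k - 1)%nat with (pred k) by lia.
  destruct k as [|k']; [lia|]. simpl pred. rewrite sum_f_sumk.
  rewrite Hw in Hmain. rewrite !Rmult_1_r in Hmain.
  change (Derive_n (theta_w theta w) 2 y) with (Derive (Derive (theta_w theta w)) y).
  eapply Rle_trans; [exact Hmain|]. right. f_equal. apply sumk_ext.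
  intros j Hj. replace (S k' - 1 - j)%nat with (S k' - j - 1)%nat by lia. ring.
Qed.
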